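(* Let $(\Omega,\mathcal{F})$ be a measurable space, $\mathrm{B}_b$ the space of bounded real-valued measurable functions on $\Omega$, and let $H\colon\mathrm{B}_b\to\mathbb{R}$ be a convex premium principle which is continuous from above, i.e. $\inf_{n\in\mathbb{N}}H(X_n)=0$ for every sequence $(X_n)_{n\in\mathbb{N}}\subset\mathrm{B}_b$ with $X_{n+1}\le X_n$ for all $n$ and $\inf_{n}X_n=0$ pointwise. Then $R_{\mathrm{Max}}(X):=\inf\{H(X_0)\mid X_0\in\mathrm{B}_b,\ X_0\ge X\}$ is continuous from above in the same sense, and every element of $\mathcal{P}:=\{\mathbb{P}\in\mathrm{ba}_+^1\mid H^*(\mathbb{P})<\infty\}$ is countably additive.
   Context: A premium principle is a map $H\colon\mathrm{B}_b\to\mathbb{R}$ with $H(X+m)=H(X)+m$ for $m\in\mathbb{R}$, $H(0)=0$, and $H(X)\ge0$ for $X\ge0$ (pointwise order). Convex means $H(\lambda X+(1-\lambda)Y)\le\lambda H(X)+(1-\lambda)H(Y)$ for $\lambda\in[0,1]$. $\mathrm{ba}_+^1$ is the set of finitely additive probability measures on $(\Omega,\mathcal{F})$, $\mathbb{E}_{\mathbb{P}}$ the associated integral, and $H^*(\mathbb{P}):=\sup_{X\in\mathrm{B}_b}(\mathbb{E}_{\mathbb{P}}(X)-H(X))$. *)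

(* Defs.v *)
From HB Require Import structures.
From mathcomp Require Import all_boot all_order all_algebra.
From mathcomp Require Import all_classical all_reals all_analysis.
Set Implicit Arguments. Unset Strict Implicit. Unset Printing Implicit Defensive.
Import Order.TTheory GRing.Theory Num.Theory numFieldNormedType.Exports.
Local Open Scope classical_set_scope.
Local Open Scope ring_scope.

Section Defs.
Context {d : measure_display} {T : measurableType d} {R : realType}.

Definition Bb (X : T -> R) : Prop :=
  measurable_fun setT X /\ exists M : R, forall w, `|X w| <= M.

Definition premium_principle (H : (T -> R) -> R) : Prop :=
  [/\ (forall X (m : R), Bb X -> H (X \+ cst m) = H X + m),
      H (cst 0) = 0 &
      (forall X, Bb X -> (forall w, 0 <= X w) -> 0 <= H X)].

Definition convex_pp (H : (T -> R) -> R) : Prop :=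
  forall X Y (l : R), Bb X -> Bb Y -> 0 <= l <= 1 ->
    H (fun w => l * X w + (1 - l) * Y w) <= l * H X + (1 - l) * H Y.

Definition is_inf_seq (u : nat -> R) (l : R) : Prop :=
  (forall n, l <= u n) /\ (forall e : R, 0 < e -> exists n, u n < l + e).

Definition cont_from_above (H : (T -> R) -> R) : Prop :=
  forall Xs : nat -> T -> R, (forall n, Bb (Xs n)) ->
    (forall n w, Xs n.+1 w <= Xs n w) ->
    (forall w, is_inf_seq (fun n => Xs n w) 0) ->
    is_inf_seq (fun n => H (Xs n)) 0.

Definition R_Max (H : (T -> R) -> R) (X : T -> R) : R :=
  inf [set H X0 | X0 in [set X0 | Bb X0 /\ forall w, X w <= X0 w]].

Definition ba1 (mu : set T -> R) : Prop :=
  [/\ (forall A, measurable A -> 0 <= mu A),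
      mu setT = 1 &
      (forall A B, measurable A -> measurable B -> A `&` B = set0 ->
         mu (A `|` B) = mu A + mu B)].

(* E_P: integral of a bounded measurable function w.r.t. a finitely
   additive measure, as supremum of integrals of measurable simple
   functions lying below X *)
Definition simple_below (X : T -> R) (s : seq (R * set T)) : Prop :=
  (forall p, p \in s -> measurable p.2) /\
  (forall w, \sum_(p <- s) p.1 * \1_(p.2) w <= X w).

Definition ba_integral (mu : set T -> R) (X : T -> R) : R :=
  sup [set \sum_(p <- s) p.1 * mu p.2 | s in simple_below X].

(* H^*(P) < oo *)
Definition finite_penalty (H : (T -> R) -> R) (mu : set T -> R) : Prop :=
  exists c : R, forall X, Bb X -> ba_integral mu X - H X <= c.

Definition countably_additive (mu : set T -> R) : Prop :=
  forall F : nat -> set T, (forall n, measurable (F n)) ->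
    trivIset setT F ->
    (fun n => \sum_(i < n) mu (F i)) @ \oo --> (mu (\bigcup_n F n) : R^o).

End Defs.

(* Main.v *)
Require Import Defs.
From mathcomp Require Import all_boot all_order all_algebra.
From mathcomp Require Import all_classical all_reals all_analysis.
From mathcomp Require Import lra.
Local Open Scope classical_set_scope.
Local Open Scope ring_scope.
Import Order.TTheory GRing.Theory Num.Theory numFieldNormedType.Exports.

Section Aux.
Context {d : measure_display} {T : measurableType d} {R : realType}.
Implicit Types (mu : set T -> R).

Lemma ba1_0 mu : ba1 mu -> mu set0 = 0.
Proof.
case=> _ _ hadd.
have := hadd set0 set0 measurable0 measurable0 (setI0 _).
rewrite setU0 => h.
have : mu set0 + mu set0 - mu set0 = mu set0 - mu set0 by rewrite -h.
by rewrite addrK subrr.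
Qed.

Lemma ba1_split mu X A : ba1 mu -> measurable X -> measurable A ->
  mu X = mu (X `&` A) + mu (X `\` A).
Proof.
case=> _ _ hadd mX mA.
rewrite -hadd ?setUIDK //; first exact: measurableI.
  exact: measurableD.
apply/seteqP; split=> w //= [[_ h1] [_ h2]]; by [].
Qed.

Arguments ba1_0 {mu}.
Arguments ba1_split {mu X A}.

Lemma ba1_mono mu A B : ba1 mu -> measurable A -> measurable B -> A `<=` B ->
  mu A <= mu B.
Proof.
move=> hmu mA mB AB.
rewrite (ba1_split hmu mB mA).
have -> : B `&` A = A by rewrite setIC; apply/setIidPl.
case: hmu => h0 _ _.
by rewrite lerDl h0 //; apply: measurableD.
Qed.

Lemma simple_bound mu (hmu : ba1 mu) (s : seq (R * set T)) :
  (forall p, p \in s -> measurable p.2) ->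
  forall B M, measurable B ->
  (forall w, B w -> \sum_(p <- s) p.1 * \1_(p.2) w <= M) ->
  \sum_(p <- s) p.1 * mu (p.2 `&` B) <= M * mu B.
Proof.
elim: s => [|[c A] s IH] hs B M mB hB.
  rewrite big_nil.
  have [M0|M0] := leP 0 M.
    by apply: mulr_ge0 => //; case: hmu => h _ _; apply: h.
  have -> : B = set0.
    apply/seteqP; split=> w // Bw; have := hB w Bw; rewrite big_nil => h.
    by move: (lt_le_trans M0 h); rewrite ltxx.
  by rewrite (ba1_0 hmu) mulr0.
have mA : measurable A by apply: (hs (c, A)); rewrite mem_head.
have hs' : forall p, p \in s -> measurable p.2.
  by move=> p ps; apply: hs; rewrite in_cons ps orbT.
rewrite big_cons /=.
have h1 := IH hs' (B `&` A) (M - c) (measurableI _ _ mB mA).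
have h2 := IH hs' (B `\` A) M (measurableD mB mA).
have e : \sum_(p <- s) p.1 * mu (p.2 `&` B) =
   \sum_(p <- s) p.1 * mu (p.2 `&` (B `&` A)) +
   \sum_(p <- s) p.1 * mu (p.2 `&` (B `\` A)).
  rewrite -big_split /= big_seq [RHS]big_seq; apply: eq_bigr => p ps.
  rewrite -mulrDr setIA setIDA -ba1_split //.
  exact: measurableI (hs' _ ps) mB.
rewrite e (ba1_split hmu mB mA) setIC.
suff [k1 k2] : \sum_(p <- s) p.1 * mu (p.2 `&` (B `&` A)) <= (M - c) * mu (B `&` A) /\
   \sum_(p <- s) p.1 * mu (p.2 `&` (B `\` A)) <= M * mu (B `\` A).
  move: k1 k2; rewrite mulrBl mulrDr; lra.
split.
- apply: h1 => w [Bw Aw]; have := hB w Bw.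
  by rewrite big_cons /= indicE mem_set // mulr1; lra.
- apply: h2 => w [Bw Aw]; have := hB w Bw.
  by rewrite big_cons /= indicE memNset // mulr0 add0r.
Qed.

Lemma ba_integral_ge mu (hmu : ba1 mu) (l : R) (A : set T) : 0 <= l ->
  measurable A -> l * mu A <= ba_integral mu (fun w => l * \1_A w).
Proof.
move=> l0 mA; rewrite /ba_integral.
apply: ub_le_sup.
  exists l => _ [s [hs hsX] <-].
  have := @simple_bound mu hmu s hs setT l measurableT.
  case: hmu => _ -> _; rewrite mulr1.
  under eq_bigr do rewrite setIT.
  apply => w _; apply: le_trans (hsX w) _.
  rewrite indicE; case: (w \in A); rewrite ?mulr1 ?mulr0 //.
exists [:: (l, A)]; last by rewrite big_seq1.
split.
  by move=> p; rewrite mem_seq1 => /eqP -> /=.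
by move=> w; rewrite big_seq1.
Qed.

End Aux.
Arguments ba1_0 {d T R mu}.
Arguments ba_integral_ge {d T R mu}.
Arguments ba1_split {d T R mu X A}.

Theorem corollary3p2 (d : measure_display) (T : measurableType d)
  (R : realType) (H : (T -> R) -> R) :
  premium_principle H -> convex_pp H -> cont_from_above H ->
  cont_from_above (R_Max H) /\
  (forall mu : set T -> R, ba1 mu -> finite_penalty H mu ->
     countably_additive mu).
Proof.
move=> [Htr H0 Hpos] _ Hcont; split.
  move=> Xs hB hdec hinf.
  have Xge0 : forall n w, 0 <= Xs n w by move=> n w; case: (hinf w) => h _; apply: h.
  have lb : forall n, lbound [set H X0 | X0 in [set X0 | Bb X0 /\ forall w, Xs n w <= X0 w]] 0.
    move=> n _ [X0 [hX0 hge] <-]; apply: Hpos => // w.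
    exact: le_trans (Xge0 n w) (hge w).
  have [hc1 hc2] := Hcont Xs hB hdec hinf.
  split.
    move=> n; apply: lb_le_inf (lb n).
    by exists (H (Xs n)); exists (Xs n).
  move=> e e0; have [n hn] := hc2 e e0; exists n.
  apply: le_lt_trans hn; apply: inf_lbound; first by exists 0; apply: lb.
  by exists (Xs n).
move=> mu hmu [c hc] F mF htriv.
pose U n := \bigcup_(i in [set k | (k < n)%N]) F i.
pose G n := \bigcup_i F i `\` U n.
have mU : forall n, measurable (U n) by move=> n; apply: bigcup_measurable => k _.
have mUF : measurable (\bigcup_i F i) by apply: bigcupT_measurable.
have mG : forall n, measurable (G n) by move=> n; apply: measurableD.
have Umono : forall m n, (m <= n)%N -> U m `<=` U n.
  move=> m n mn w [i /= im Fi]; exists i => //=; exact: leq_trans im mn.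
have Gmono : forall m n, (m <= n)%N -> G n `<=` G m.
  move=> m n mn w [Fw Uw]; split => // Um; apply: Uw; exact: Umono Um.
have sumU : forall n, \sum_(i < n) mu (F i) = mu (U n).
  elim=> [|n IH].
    rewrite big_ord0; have -> : U 0%N = set0.
      by apply/seteqP; split=> w // [i /=].
    by rewrite ba1_0.
  rewrite big_ord_recr /= IH.
  have -> : U n.+1 = U n `|` F n.
    apply/seteqP; split=> w.
      move=> [i /=]; rewrite ltnS leq_eqVlt => /orP [/eqP -> | lt] Fi; first by right.
      by left; exists i.
    by move=> [[i /= lt Fi]|Fn]; [exists i => //=; apply: ltnW | exists n => //=].
  case: hmu => _ _ hadd; rewrite hadd //.
  apply/seteqP; split=> w // [[i /= lt Fi] Fn].
  have ein : i = n by apply: htriv => //; exists w.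
  by move: lt; rewrite ein ltnn.
have decomp : forall n, mu (\bigcup_i F i) = mu (U n) + mu (G n).
  move=> n; rewrite (ba1_split hmu mUF (mU n)).
  have -> : \bigcup_i F i `&` U n = U n.
    apply/setIidPr => w [i _ Fi]; by exists i.
  by [].
have hpos : forall A, measurable A -> 0 <= mu A by case: hmu.
suff main : forall e : R, 0 < e -> exists N, mu (G N) < e.
  apply/cvgrPdist_lt => e e0.
  have [N hN] := main e e0.
  exists N => // n /= Nn.
  rewrite sumU (decomp n) addrAC subrr add0r ger0_norm; last exact: hpos.
  apply: le_lt_trans hN; apply: ba1_mono => //; exact: Gmono.
move=> e e0.
pose l := 2 * (`|c| + 1) / e.
have l0 : 0 < l by rewrite /l; apply: divr_gt0 => //; apply: mulr_gt0 => //; apply: ltr_wpDl.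
have le : l * e = 2 * (`|c| + 1) by rewrite /l mulfVK // gt_eqF.
pose Xs n := fun w => l * \1_(G n) w.
have hB : forall n, Bb (Xs n).
  move=> n; split.
    apply: measurable_realfun.measurable_funM; first exact: measurable_cst.
    exact: measurable_realfun.measurable_indic.
  exists l => w; rewrite /Xs indicE; case: (w \in G n).
    by rewrite mulr1 gtr0_norm.
  by rewrite mulr0 normr0 ltW.
have hdec : forall n w, Xs n.+1 w <= Xs n w.
  move=> n w; rewrite /Xs !indicE.
  case: (boolP (w \in G n.+1)) => h.
    by rewrite mem_set //; apply: (Gmono n n.+1) => //; move: h; rewrite inE.
  by rewrite mulr0; case: (w \in G n); rewrite ?mulr1 ?mulr0 //; apply: ltW.
have hinf : forall w, is_inf_seq (fun n => Xs n w) 0.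
  move=> w; split.
    by move=> n; rewrite /Xs indicE; case: (w \in G n); rewrite ?mulr1 ?mulr0 //; apply: ltW.
  move=> e' e'0.
  have [N hN] : exists N, ~ G N w.
    have [[k _ Fk]|nF] := pselect ((\bigcup_i F i) w).
      by exists k.+1 => -[_]; apply; exists k => /=.
    by exists 0%N => -[].
  by exists N; rewrite /Xs indicE memNset // mulr0 add0r.
have [_ hc2] := Hcont Xs hB hdec hinf.
have le0 : 0 < l * e / 2 by apply: divr_gt0 => //; apply: mulr_gt0.
have [N hN] := hc2 _ le0.
exists N.
have h1 := ba_integral_ge hmu l (G N) (ltW l0) (mG N).
have h2 := hc (Xs N) (hB N).
rewrite add0r in hN.
have : l * mu (G N) < l * e.
  rewrite le; move: h1 h2 hN; rewrite /Xs le.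
  have : c <= `|c| by apply: ler_norm.
  lra.
by rewrite ltr_pM2l.
Qed.
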